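(* Let $2\le k\le n$ and let $w$ be a word of length $k$. Then \[f(w,n,1)\cdot(3n-4k)\;\le\; f(w,n,2)\;\le\; f(w,n,1)\cdot 2n+4\sum_{i=k}^{n} f(w,i,1).\]
   Context: Let $[n]=\{1,\dots,n\}$. For a positive integer $d$, an $(n,d)$-grid is a function $G:[n]^d\to\Sigma$ for an arbitrary set of letters $\Sigma$. A line of length $k$ in $[n]^d$ is a set $\{p,p+v,\dots,p+(k-1)v\}\subseteq[n]^d$ with $p\in[n]^d$ and $v\in\{-1,0,1\}^d\setminus\{\vec 0\}$ (each such set counted once). For a word $w=w_1\cdots w_k$, such a line contains $w$ in $G$ if $G(p)G(p+v)\cdots G(p+(k-1)v)=w$ or this sequence read backwards equals $w$. $f(w,G)$ is the number of lines of length $k$ in $[n]^d$ containing $w$, and $f(w,n,d)=\max_G f(w,G)$ over all $(n,d)$-grids $G$. In particular $f(w,i,1)$ is the maximum number of sets of $k$ consecutive positions in a sequence of length $i$ that read $w$ forwards or backwards. *)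

(* Defs.v *)
From mathcomp Require Import all_boot all_order all_algebra.
Set Implicit Arguments. Unset Strict Implicit. Unset Printing Implicit Defensive.
Import GRing.Theory Num.Theory.
Local Open Scope ring_scope.

(* Points of [n]^d, coordinates shifted to {0,...,n-1}. *)
Definition point (n d : nat) := {ffun 'I_d -> 'I_n}.
(* Directions v in {-1,0,1}^d, encoded by 'I_3 via i |-> i - 1. *)
Definition dir (d : nat) := {ffun 'I_d -> 'I_3}.

Definition dirz d (v : dir d) (i : 'I_d) : int := (v i)%:Z - 1.
Definition nonzero_dir d (v : dir d) : bool := [exists i, dirz v i != 0].

Definition coord n d (p : point n d) (v : dir d) (j : nat) (i : 'I_d) : int :=
  ((p i : nat)%:Z + j%:Z * dirz v i)%R.

Definition is_pt n d (p : point n d) (v : dir d) (j : nat) (x : point n d) : bool :=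
  [forall i, ((x i : nat)%:Z == coord p v j i)].

Definition fits n d (p : point n d) (v : dir d) (k : nat) : bool :=
  [forall j : 'I_k, [exists x : point n d, is_pt p v j x]].

Definition line_set n d (p : point n d) (v : dir d) (k : nat) : {set point n d} :=
  [set x | [exists j : 'I_k, is_pt p v j x]].

Definition reads (T : finType) n d (G : {ffun point n d -> T}) (p : point n d)
  (v : dir d) (u : seq T) : bool :=
  [forall j : 'I_(size u), [forall x : point n d,
     is_pt p v j x ==> (G x == nth (G x) u j)]].

Definition contains_word (T : finType) n d (G : {ffun point n d -> T})
  (p : point n d) (v : dir d) (w : seq T) : bool :=
  reads G p v w || reads G p v (rev w).

(* the set of lines of length |w| (as point sets, each counted once) containing w *)
Definition lines_with (T : finType) n d (G : {ffun point n d -> T}) (w : seq T)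
  : {set {set point n d}} :=
  [set L | [exists p : point n d, [exists v : dir d,
     [&& nonzero_dir v, fits p v (size w), L == line_set p v (size w)
       & contains_word G p v w]]]].

Definition fG (T : finType) n d (G : {ffun point n d -> T}) (w : seq T) : nat :=
  #|lines_with G w|.

Definition f (T : finType) (w : seq T) (n d : nat) : nat :=
  \max_(G : {ffun point n d -> T}) fG G w.

(* Main.v *)
Require Import Defs.
From mathcomp Require Import all_boot all_order all_algebra.
From mathcomp Require Import zify.
Import GRing.Theory Num.Theory.
Set Implicit Arguments. Unset Strict Implicit. Unset Printing Implicit Defensive.
Local Open Scope ring_scope.

Lemma ispt_iff n d (p : point n d) (v : dir d) j (x : point n d) :
  is_pt p v j x <-> forall i, (x i : nat)%:Z = ((p i : nat)%:Z + j%:Z * dirz v i)%R.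
Proof.
split; first by move=> /forallP H i; apply/eqP; exact: H.
by move=> H; apply/forallP=> i; apply/eqP; exact: H.
Qed.

Lemma ispt_uniq n d (p : point n d) (v : dir d) j (x y : point n d) :
  is_pt p v j x -> is_pt p v j y -> x = y.
Proof.
move=> /ispt_iff Hx /ispt_iff Hy; apply/ffunP=> i; apply/val_inj.
have := Hx i; rewrite -Hy => /eqP; rewrite eqz_nat => /eqP //.
Qed.

Lemma fitsP n d (p : point n d) (v : dir d) k j :
  fits p v k -> (j < k)%N -> exists x, is_pt p v j x.
Proof.
move=> /forallP H jk; have /existsP [x Hx] := H (Ordinal jk); by exists x.
Qed.

Lemma fitsI n d (p : point n d) (v : dir d) k :
  (forall j, (j < k)%N -> exists x, is_pt p v j x) -> fits p v k.
Proof.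
move=> H; apply/forallP=> j; have [x Hx] := H j (ltn_ord j); by apply/existsP; exists x.
Qed.

Lemma in_line n d (p : point n d) (v : dir d) k x :
  (x \in line_set p v k) = [exists j : 'I_k, is_pt p v j x].
Proof. by rewrite inE. Qed.

Lemma in_lineP n d (p : point n d) (v : dir d) k x :
  reflect (exists2 j, (j < k)%N & is_pt p v j x) (x \in line_set p v k).
Proof.
rewrite in_line; apply: (iffP existsP) => [[j Hj]|[j jk Hj]].
  by exists j.
by exists (Ordinal jk).
Qed.

Lemma readsP (T : finType) n d (G : {ffun point n d -> T}) p v u x0 :
  reads G p v u -> forall j x, (j < size u)%N -> is_pt p v j x -> G x = nth x0 u j.
Proof.
move=> /forallP H j x ju Hx; have /forallP H2 := H (Ordinal ju).
have /implyP H3 := H2 x; have /eqP -> := H3 Hx.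
exact: set_nth_default.
Qed.

Lemma readsI (T : finType) n d (G : {ffun point n d -> T}) p v u x0 :
  (forall j x, (j < size u)%N -> is_pt p v j x -> G x = nth x0 u j) -> reads G p v u.
Proof.
move=> H; apply/forallP=> j; apply/forallP=> x; apply/implyP=> Hx.
by rewrite (H j x (ltn_ord j) Hx); apply/eqP; exact: set_nth_default.
Qed.

Lemma card_bigcup_le (I : finType) (U : finType) (F : I -> {set U}) :
  (#|\bigcup_(i : I) F i| <= \sum_(i : I) #|F i|)%N.
Proof.
apply: (big_ind2 (fun (A : {set U}) m => #|A| <= m)%N).
- by rewrite cards0.
- move=> A1 m1 A2 m2 H1 H2; apply: leq_trans (leq_card_setU A1 A2) _.
  exact: leq_add.
- by [].
Qed.

Lemma lines_sub (T : finType) n d (G : {ffun point n d -> T}) w L :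
  L \in lines_with G w -> exists p, exists v,
   [/\ nonzero_dir v, fits p v (size w), L = line_set p v (size w) & contains_word G p v w].
Proof.
rewrite inE => /existsP [p /existsP [v /and4P [H1 H2 /eqP H3 H4]]].
by exists p, v.
Qed.

Lemma lines_in (T : finType) n d (G : {ffun point n d -> T}) w p v :
  nonzero_dir v -> fits p v (size w) -> contains_word G p v w ->
  line_set p v (size w) \in lines_with G w.
Proof.
move=> H1 H2 H4; rewrite inE; apply/existsP; exists p; apply/existsP; exists v.
by rewrite H1 H2 eqxx H4.
Qed.

Lemma fG_le_f (T : finType) (w : seq T) n d (G : {ffun point n d -> T}) :
  (fG G w <= f w n d)%N.
Proof. rewrite /f; exact: (@leq_bigmax _ (fun G => fG G w)). Qed.

Lemma ispt1 n (q : point n 1) (s : dir 1) j (x : point n 1) :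
  is_pt q s j x <-> (x ord0 : nat)%:Z = (q ord0 : nat)%:Z + j%:Z * dirz s ord0.
Proof.
rewrite ispt_iff; split; first by move=> H; exact: H.
by move=> H i; rewrite (ord1 i).
Qed.

Lemma lift_line (T : finType) n d m (G : {ffun point n d -> T}) (e : nat -> point n d)
  w p v (t0 : int) (s : dir 1) :
  (0 < size w)%N ->
  nonzero_dir v -> fits p v (size w) -> contains_word G p v w -> nonzero_dir s ->
  (forall j, (j < size w)%N -> (0 <= t0 + j%:Z * dirz s ord0 < m%:Z) /\
      is_pt p v j (e (absz (t0 + j%:Z * dirz s ord0)))) ->
  exists2 L1, L1 \in lines_with [ffun z : point m 1 => G (e (z ord0))] w &
     line_set p v (size w) = (fun z : point m 1 => e (z ord0)) @: L1.
Proof.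
move=> k0 nzv fv cw nzs H.
set k := size w in k0 fv H *.
set G1 := [ffun z : point m 1 => G (e (z ord0))].
have mk : forall j, (j < k)%N -> (absz (t0 + j%:Z * dirz s ord0)%R < m)%N.
  by move=> j jk; have [/andP [h1 h2] _] := H j jk; lia.
pose x1 j (jk : (j < k)%N) : point m 1 := [ffun _ => Ordinal (mk j jk)].
have x1v : forall j jk, (x1 j jk ord0 : nat) = absz (t0 + j%:Z * dirz s ord0).
  by move=> j jk; rewrite /x1 ffunE.
pose q := x1 0%N k0.
have qv : ((q ord0 : nat)%:Z = t0).
  have [/andP [h1 h2] _] := H 0%N k0.
  rewrite /q x1v; lia.
have x1pt : forall j jk, is_pt q s j (x1 j jk).
  move=> j jk; apply/ispt1; rewrite x1v qv.
  have [/andP [h1 h2] _] := H j jk; lia.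
have ptx : forall j x (jk : (j < k)%N), is_pt q s j x -> x = x1 j jk.
  move=> j x jk Hx; exact: (ispt_uniq Hx (x1pt j jk)).
exists (line_set q s k).
  apply: lines_in => //.
    by apply: fitsI => j jk; exists (x1 j jk).
  have conv : forall u, size u = k -> reads G p v u -> reads G1 q s u.
    move=> u su Hr; apply: (readsI (x0 := G1 q)) => j x ju Hx.
    rewrite su in ju; rewrite (ptx j x ju Hx) /G1 ffunE x1v.
    have [_ Hp] := H j ju.
    by rewrite (readsP (G1 q) Hr _ Hp) // su.
  case/orP: cw => Hr; apply/orP; [left|right]; apply: conv Hr => //.
  by rewrite size_rev.
apply/setP=> z; apply/idP/idP.
  move=> /in_lineP [j jk Hj]; apply/imsetP; exists (x1 j jk).
    by apply/in_lineP; exists j => //; exact: x1pt.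
  have [_ Hp] := H j jk; rewrite x1v; exact: ispt_uniq Hj Hp.
case/imsetP=> x /in_lineP [j jk Hj] ->; apply/in_lineP; exists j => //.
rewrite (ptx j x jk Hj) x1v; by have [_ Hp] := H j jk.
Qed.

Lemma ord2P (P : 'I_2 -> Prop) : P ord0 -> P ord_max -> forall i, P i.
Proof.
move=> H0 H1 [[|[|//]] Hi].
  by rewrite (_ : Ordinal Hi = ord0) //; apply: val_inj.
by rewrite (_ : Ordinal Hi = ord_max) //; apply: val_inj.
Qed.

Definition mk2 n (a b : nat) : point n.+1 2 :=
  [ffun i : 'I_2 => if i == ord0 then inord a else inord b].

Lemma mk2_0 n a b : (a <= n)%N -> (mk2 n a b ord0 : nat) = a.
Proof. by move=> h; rewrite ffunE eqxx inordK. Qed.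

Lemma mk2_1 n a b : (b <= n)%N -> (mk2 n a b ord_max : nat) = b.
Proof. by move=> h; rewrite ffunE /= inordK. Qed.

Lemma ispt2 n (p : point n 2) (v : dir 2) j (x : point n 2) :
  is_pt p v j x <->
  ((x ord0 : nat)%:Z = (p ord0 : nat)%:Z + j%:Z * dirz v ord0 /\
   (x ord_max : nat)%:Z = (p ord_max : nat)%:Z + j%:Z * dirz v ord_max).
Proof.
rewrite ispt_iff; split; first by move=> H; split; apply: H.
by case=> h0 h1; apply: ord2P.
Qed.

Lemma ispt_mk2 n (p : point n.+1 2) (v : dir 2) j a b :
  (a <= n)%N -> (b <= n)%N ->
  a%:Z = (p ord0 : nat)%:Z + j%:Z * dirz v ord0 ->
  b%:Z = (p ord_max : nat)%:Z + j%:Z * dirz v ord_max ->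
  is_pt p v j (mk2 n a b).
Proof. by move=> ha hb h0 h1; apply/ispt2; rewrite mk2_0 // mk2_1. Qed.

Lemma pt_facts n (p : point n.+1 2) (v : dir 2) k j :
  fits p v k -> (j < k)%N ->
  (0 <= (p ord0 : nat)%:Z + j%:Z * dirz v ord0 <= n%:Z) /\
  (0 <= (p ord_max : nat)%:Z + j%:Z * dirz v ord_max <= n%:Z).
Proof.
move=> fv jk; have [x /ispt2 [h0 h1]] := fitsP fv jk.
rewrite -h0 -h1; have := ltn_ord (x ord0); have := ltn_ord (x ord_max); lia.
Qed.


Definition fam (T : finType) n (G2 : {ffun point n 2 -> T}) (w : seq T)
  (e : nat -> point n 2) m : {set {set point n 2}} :=
  (fun L1 : {set point m 1} => (fun z : point m 1 => e (z ord0)) @: L1) @: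
     lines_with [ffun z : point m 1 => G2 (e (z ord0))] w.

Lemma fam_card (T : finType) n (G2 : {ffun point n 2 -> T}) w e m :
  (#|fam G2 w e m| <= f w m 1)%N.
Proof. exact: leq_trans (leq_imset_card _ _) (fG_le_f _ _). Qed.

Lemma fam_in (T : finType) n (G2 : {ffun point n 2 -> T}) w e m p v (t0 : int) (s : dir 1) :
  (0 < size w)%N ->
  nonzero_dir v -> fits p v (size w) -> contains_word G2 p v w -> nonzero_dir s ->
  (forall j, (j < size w)%N -> (0 <= t0 + j%:Z * dirz s ord0 < m%:Z) /\
      is_pt p v j (e (absz (t0 + j%:Z * dirz s ord0)))) ->
  line_set p v (size w) \in fam G2 w e m.
Proof.
move=> k0 nzv fv cw nzs H.
have [L1 HL1 ->] := lift_line k0 nzv fv cw nzs H.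
by apply/imsetP; exists L1.
Qed.

Lemma I3_cases (a : 'I_3) : (a : nat) = 0%N \/ (a : nat) = 1%N \/ (a : nat) = 2%N.
Proof. by case: a => [[|[|[|]]]] //= _; auto. Qed.

Definition cover6 (T : finType) n (G2 : {ffun point n.+1 2 -> T}) w :=
  (\bigcup_(a < n.+1) fam G2 w (fun t => mk2 n t a) n.+1) :|:
  (\bigcup_(a < n.+1) fam G2 w (fun t => mk2 n a t) n.+1) :|:
  (\bigcup_(a < n.+1) fam G2 w (fun t => mk2 n (a + t) t) (n.+1 - a)) :|:
  (\bigcup_(a < n.+1) fam G2 w (fun t => mk2 n t (a + t)) (n.+1 - a)) :|:
  (\bigcup_(a < n.+1) fam G2 w (fun t => mk2 n t (n - a - t)) (n.+1 - a)) :|: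
  (\bigcup_(a < n.+1) fam G2 w (fun t => mk2 n (a + t) (n - t)) (n.+1 - a)).

Ltac sc fv h0 h1 := let j := fresh "j" in let jk := fresh "jk" in move=> j jk; move: (pt_facts fv jk);
  rewrite /dirz ?ffunE ?h0 ?h1 => -[? ?]; split; [lia| apply: ispt_mk2; rewrite /dirz ?h0 ?h1; lia].

Lemma nzs_of (a : 'I_3) : (a : nat) <> 1%N -> nonzero_dir ([ffun _ : 'I_1 => a] : dir 1).
Proof. move=> h; apply/existsP; exists ord0; rewrite /dirz ffunE; apply/eqP; lia. Qed.

Lemma cover_ok (T : finType) n (G2 : {ffun point n.+1 2 -> T}) w L :
  (0 < size w)%N -> L \in lines_with G2 w -> L \in cover6 G2 w.
Proof.
move=> k0 /lines_sub [p [v [nzv fv -> cw]]].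
have hx := ltn_ord (p ord0); have hy := ltn_ord (p ord_max).
set x := (p ord0 : nat) in hx *; set y := (p ord_max : nat) in hy *.
rewrite /cover6 !in_setU.
have [h0|[h0|h0]] := I3_cases (v ord0); have [h1|[h1|h1]] := I3_cases (v ord_max).
-
  have [le|lt] := leqP y x.
    have ha : (x - y < n.+1)%N by lia.
    do 3 (apply/orP; left); apply/orP; right.
    apply/bigcupP; exists (Ordinal ha) => //=.
    apply: (fam_in (t0 := y%:Z) (s := [ffun _ => v ord0])) => //.
      by apply: nzs_of; lia.
    sc fv h0 h1.
  have ha : (y - x < n.+1)%N by lia.
  do 2 (apply/orP; left); apply/orP; right.
  apply/bigcupP; exists (Ordinal ha) => //=.
  apply: (fam_in (t0 := x%:Z) (s := [ffun _ => v ord0])) => //.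
    by apply: nzs_of; lia.
  sc fv h0 h1.
- have ha : (y < n.+1)%N by lia.
    do 5 (apply/orP; left).
    apply/bigcupP; exists (Ordinal ha) => //=.
    apply: (fam_in (t0 := (x)%:Z) (s := [ffun _ => v ord0])) => //.
      by apply: nzs_of; lia.
    sc fv h0 h1.
- have [le|lt] := leqP (x + y) n.
    have ha : (n - (x + y) < n.+1)%N by lia.
    apply/orP; left; apply/orP; right.
    apply/bigcupP; exists (Ordinal ha) => //=.
    apply: (fam_in (t0 := (x)%:Z) (s := [ffun _ => v ord0])) => //.
      by apply: nzs_of; lia.
    sc fv h0 h1.
  have ha : (x + y - n < n.+1)%N by lia.
    apply/orP; right.
    apply/bigcupP; exists (Ordinal ha) => //=.
    apply: (fam_in (t0 := (n - y)%:Z) (s := [ffun _ => v ord0])) => //.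
      by apply: nzs_of; lia.
    sc fv h0 h1.
- have ha : (x < n.+1)%N by lia.
    do 4 (apply/orP; left); apply/orP; right.
    apply/bigcupP; exists (Ordinal ha) => //=.
    apply: (fam_in (t0 := (y)%:Z) (s := [ffun _ => v ord_max])) => //.
      by apply: nzs_of; lia.
    sc fv h0 h1.
- exfalso; case/existsP: nzv => i Hi; move: i Hi.
  apply: (ord2P (P := fun i => dirz v i != 0 -> False)); rewrite /dirz ?h0 ?h1 //.
- have ha : (x < n.+1)%N by lia.
    do 4 (apply/orP; left); apply/orP; right.
    apply/bigcupP; exists (Ordinal ha) => //=.
    apply: (fam_in (t0 := (y)%:Z) (s := [ffun _ => v ord_max])) => //.
      by apply: nzs_of; lia.
    sc fv h0 h1.
- have [le|lt] := leqP (x + y) n.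
    have ha : (n - (x + y) < n.+1)%N by lia.
    apply/orP; left; apply/orP; right.
    apply/bigcupP; exists (Ordinal ha) => //=.
    apply: (fam_in (t0 := (x)%:Z) (s := [ffun _ => v ord0])) => //.
      by apply: nzs_of; lia.
    sc fv h0 h1.
  have ha : (x + y - n < n.+1)%N by lia.
    apply/orP; right.
    apply/bigcupP; exists (Ordinal ha) => //=.
    apply: (fam_in (t0 := (n - y)%:Z) (s := [ffun _ => v ord0])) => //.
      by apply: nzs_of; lia.
    sc fv h0 h1.
- have ha : (y < n.+1)%N by lia.
    do 5 (apply/orP; left).
    apply/bigcupP; exists (Ordinal ha) => //=.
    apply: (fam_in (t0 := (x)%:Z) (s := [ffun _ => v ord0])) => //.
      by apply: nzs_of; lia.
    sc fv h0 h1.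
-
  have [le|lt] := leqP y x.
    have ha : (x - y < n.+1)%N by lia.
    do 3 (apply/orP; left); apply/orP; right.
    apply/bigcupP; exists (Ordinal ha) => //=.
    apply: (fam_in (t0 := y%:Z) (s := [ffun _ => v ord0])) => //.
      by apply: nzs_of; lia.
    sc fv h0 h1.
  have ha : (y - x < n.+1)%N by lia.
  do 2 (apply/orP; left); apply/orP; right.
  apply/bigcupP; exists (Ordinal ha) => //=.
  apply: (fam_in (t0 := x%:Z) (s := [ffun _ => v ord0])) => //.
    by apply: nzs_of; lia.
  sc fv h0 h1.
Qed.

Local Close Scope ring_scope.

Lemma f_small (T : finType) (w : seq T) i : (i < size w)%N -> f w i 1 = 0%N.
Proof.
move=> ik; apply/eqP; rewrite -leqn0; apply/bigmax_leqP => G _.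
rewrite leqn0 /fG cards_eq0; apply/eqP/setP => L; rewrite in_set0.
apply/negbTE/negP => /lines_sub [p [v [nzv fv _ _]]].
have k0 : (0 < size w)%N by lia.
have kk : (size w).-1 < size w by lia.
have [x0 /ispt1 H0] := fitsP fv k0.
have [x1 /ispt1 H1] := fitsP fv kk.
case/existsP: nzv => i0; rewrite (ord1 i0) /dirz => nz.
have := ltn_ord (x0 ord0); have := ltn_ord (x1 ord0); have := ltn_ord (v ord0).
rewrite /dirz in H0 H1.
move: H0 H1 nz; case: (I3_cases (v ord0)) => [->|[->|->]] /=; lia.
Qed.

Lemma sum_rev (F : nat -> nat) N k : (1 <= k)%N -> (k <= N.+1)%N ->
  (forall i, (i < k)%N -> F i = 0%N) ->
  (\sum_(a < N) F (N - a) = \sum_(k <= i < N.+1) F i)%N.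
Proof.
move=> k1 kN Fz.
rewrite -(big_mkord xpredT (fun a => F (N - a))) big_nat_rev /=.
rewrite (eq_big_nat _ _ (F2 := fun a => F a.+1)); last by move=> a /andP [_ h]; congr F; lia.
have -> : (\sum_(0 <= i < N) F i.+1 = \sum_(1 <= i < N.+1) F i)%N by rewrite big_add1.
rewrite (big_cat_nat k1 kN) /= big1_seq ?add0n //.
move=> i /andP [_]; rewrite mem_index_iota => /andP [_ h]; exact: Fz.
Qed.

Lemma upper (T : finType) (w : seq T) n : (1 <= size w)%N -> (size w <= n.+1)%N ->
  (f w n.+1 2 <= f w n.+1 1 * (2 * n.+1) + 4 * \sum_(size w <= i < n.+2) f w i 1)%N.
Proof.
move=> k1 kN.
set S := (\sum_(size w <= i < n.+2) f w i 1)%N.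
have HS : (\sum_(a < n.+1) f w (n.+1 - a) 1 = S)%N.
  apply: (sum_rev (F := fun i => f w i 1)) => //; first lia.
  by move=> i; exact: f_small.
set fN := f w n.+1 1.
rewrite {1}/f; apply/bigmax_leqP => G _; rewrite /fG.
have k0 : (0 < size w)%N by lia.
have sub : lines_with G w \subset cover6 G w.
  by apply/subsetP => L; exact: cover_ok.
apply: leq_trans (subset_leq_card sub) _.
have Bc : forall (e : 'I_n.+1 -> nat -> point n.+1 2),
    (#|\bigcup_(a < n.+1) fam G w (e a) n.+1| <= n.+1 * fN)%N.
  move=> e; apply: leq_trans (card_bigcup_le (fun a => fam G w (e a) n.+1)) _.
  apply: (@leq_trans (\sum_(a < n.+1) fN)).
    by apply: leq_sum => a _; exact: fam_card.
  by rewrite sum_nat_const card_ord.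
have Bd : forall (e : 'I_n.+1 -> nat -> point n.+1 2),
    (#|\bigcup_(a < n.+1) fam G w (e a) (n.+1 - a)| <= S)%N.
  move=> e; apply: leq_trans (card_bigcup_le _) _.
  rewrite -HS; apply: leq_sum => a _; exact: fam_card.
rewrite /cover6.
have B1 := Bc (fun a t => mk2 n t a).
have B2 := Bc (fun a t => mk2 n a t).
have B3 := Bd (fun a t => mk2 n (a + t) t).
have B4 := Bd (fun a t => mk2 n t (a + t)).
have B5 := Bd (fun a t => mk2 n t (n - a - t)).
have B6 := Bd (fun a t => mk2 n (a + t) (n - t)).
have cu : forall A B : {set {set point n.+1 2}}, (#|A :|: B| <= #|A| + #|B|)%N.
  by move=> A B; exact: leq_card_setU.
rewrite (_ : (fN * (2 * n.+1) + 4 * S = n.+1 * fN + n.+1 * fN + S + S + S + S)%N); last by lia.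
apply: (leq_trans (cu _ _)); apply: leq_add; last exact: B6.
apply: (leq_trans (cu _ _)); apply: leq_add; last exact: B5.
apply: (leq_trans (cu _ _)); apply: leq_add; last exact: B4.
apply: (leq_trans (cu _ _)); apply: leq_add; last exact: B3.
apply: (leq_trans (cu _ _)); apply: leq_add; [exact: B1 | exact: B2].
Qed.

Local Open Scope ring_scope.

Definition mk1 n (i : nat) : point n.+1 1 := [ffun _ => inord i].

Lemma mk1_0 n i : (i <= n)%N -> (mk1 n i ord0 : nat) = i.
Proof. by move=> h; rewrite ffunE inordK. Qed.

Lemma mk1_eq n (x : point n.+1 1) : x = mk1 n (x ord0).
Proof. by apply/ffunP => i; rewrite ffunE (ord1 i) inord_val. Qed.

Lemma read1 (T : finType) n (S : {ffun point n.+1 1 -> T}) q u (v' : seq T) j x0 :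
  fits q u (size v') -> reads S q u v' -> (j < size v')%N ->
  S (mk1 n (absz ((q ord0 : nat)%:Z + j%:Z * dirz u ord0))) = nth x0 v' j.
Proof.
move=> fv rv jk; have [x Hx] := fitsP fv jk.
rewrite -(readsP x0 rv jk Hx); congr (S _).
have /ispt1 e := Hx; rewrite (mk1_eq x); congr mk1; lia.
Qed.

Lemma nth_rev_rev (T : Type) (x0 : T) (s : seq T) j : (j < size s)%N ->
  nth x0 (rev s) (size s - j.+1) = nth x0 s j.
Proof. move=> h; rewrite nth_rev; last by lia. congr nth; lia. Qed.

Ltac liag := repeat (match goal with H : context [nat_of_ord ?t] |- _ => revert H end);
  repeat (match goal with |- context [nat_of_ord ?t] =>
     let a := fresh "a" in set a := nat_of_ord t; clearbody a end);
  intros; lia.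

Section Lower.
Variables (T : finType) (w : seq T) (n : nat) (S : {ffun point n.+1 1 -> T}).
Variable k : nat.
Hypothesis ek : size w = k.
Hypothesis k2 : (2 <= k)%N.
Hypothesis kN : (k <= n.+1)%N.

Let Sv i := S (mk1 n i).
Definition occ (t : nat) :=
  [forall j : 'I_k, Sv (t + j) == nth (Sv 0) w j] ||
  [forall j : 'I_k, Sv (t + j) == nth (Sv 0) (rev w) j].
Definition occset := [set t : 'I_n.+1 | (t + k <= n.+1)%N && occ t].
Definition Ival (t : nat) := [set z : point n.+1 1 | (t <= z ord0 < t + k)%N].

Lemma lines1_sub : lines_with S w \subset (fun t : 'I_n.+1 => Ival t) @: occset.
Proof.
apply/subsetP => L /lines_sub [q [u [nzu fv -> cw]]].
have fk : fits q u k by rewrite -ek.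
have fvr : fits q u (size (rev w)) by rewrite size_rev.
have hq := ltn_ord (q ord0).
have k0 : (0 < k)%N by lia.
have kk : (k.-1 < k)%N by lia.
have [x /ispt1 ex] := fitsP fk kk.
have hx := ltn_ord (x ord0).
have [h|[h|h]] := I3_cases (u ord0).
-
  have dz : dirz u ord0 = (-1)%Z by rewrite /dirz h.
  rewrite dz in ex.
  have t_ok : ((q ord0) - k.-1 < n.+1)%N by lia.
  apply/imsetP; exists (Ordinal t_ok).
    rewrite inE /=; apply/andP; split; first lia.
    case/orP: cw => rv; apply/orP; [right|left]; apply/forallP => j; apply/eqP; have hj := ltn_ord j.
      have jk : (size w - j.+1 < size w)%N by rewrite ek; lia.
      rewrite /Sv nth_rev; last by rewrite ek.
      rewrite -(read1 _ fv rv jk) dz; congr (S (mk1 n _)); rewrite ek; lia.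
    have jw : (j < size w)%N by rewrite ek.
    have jk : (size w - j.+1 < size (rev w))%N by rewrite size_rev ek; lia.
    rewrite /Sv -(nth_rev_rev _ jw) -(read1 _ fvr rv jk) dz.
    congr (S (mk1 n _)); rewrite ek; lia.
  apply/setP => z; apply/in_lineP/idP; rewrite inE /=.
    case=> j jk /ispt1; rewrite dz => e; lia.
  move=> hz; exists ((q ord0) - z ord0)%N; first by rewrite ek; liag.
  apply/ispt1; rewrite dz; liag.
- exfalso; case/existsP: nzu => i; rewrite (ord1 i) /dirz h; lia.
- have dz : dirz u ord0 = 1 by rewrite /dirz h.
  rewrite dz in ex.
  apply/imsetP; exists (q ord0).
    rewrite inE /=; apply/andP; split; first lia.
    case/orP: cw => rv; apply/orP; [left|right]; apply/forallP => j; apply/eqP; have hj := ltn_ord j.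
      have jw : (j < size w)%N by rewrite ek.
      rewrite /Sv -(read1 _ fv rv jw) dz; congr (S (mk1 n _)); lia.
    have jk : (j < size (rev w))%N by rewrite size_rev ek.
    rewrite /Sv -(read1 _ fvr rv jk) dz; congr (S (mk1 n _)); lia.
  apply/setP => z; apply/in_lineP/idP; rewrite inE /=.
    case=> j jk /ispt1; rewrite dz => e; lia.
  move=> hz; exists (z ord0 - (q ord0))%N; first by rewrite ek; liag.
  apply/ispt1; rewrite dz; liag.
Qed.


Definition G2 : {ffun point n.+1 2 -> T} := [ffun z : point n.+1 2 => Sv (z ord0)].
Definition cs (s j : nat) : nat := if s == 0%N then 0%N else if s == 1%N then j else (k - 1 - j)%N.
Definition dirV (s : nat) : dir 2 :=
  [ffun i : 'I_2 => if i == ord0 then (inord 2 : 'I_3)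
                    else inord (if s == 0%N then 1%N else if s == 1%N then 2%N else 0%N)].
Definition Psi (u : 'I_n.+1 * 'I_(n.+1 - k).+1 * 'I_3) : {set point n.+1 2} :=
  line_set (mk2 n u.1.1 (u.1.2 + cs u.2 0)) (dirV u.2) k.

Lemma dirV0 s : dirz (dirV s) ord0 = 1.
Proof. by rewrite /dirz ffunE eqxx inordK. Qed.

Lemma dirV1 s : dirz (dirV s) ord_max =
  (if s == 0%N then 0%:Z else if s == 1%N then 1%:Z else (-1)%Z).
Proof.
rewrite /dirz ffunE /= inordK; last by case: ifP => //; case: ifP.
by case: ifP => //; case: ifP.
Qed.

Lemma memPsi (t y0 s : nat) z : (t + k <= n.+1)%N -> (y0 <= n.+1 - k)%N -> (s < 3)%N ->
  (z \in line_set (mk2 n t (y0 + cs s 0)) (dirV s) k) <->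
  exists2 j, (j < k)%N & ((z ord0 : nat) = t + j /\ (z ord_max : nat) = y0 + cs s j)%N.
Proof.
move=> ht hy hs; have hn := ltn_ord (z ord0); have hm := ltn_ord (z ord_max).
have [->|[->|->]] : s = 0%N \/ s = 1%N \/ s = 2%N by lia.
- split.
    case/in_lineP => j jk /ispt2 []; rewrite dirV0 dirV1 /cs /=.
    rewrite mk2_0; [|lia]; rewrite mk2_1; [|lia]; move=> e0 e1; exists j => //; rewrite /cs /=; split; liag.
  case=> j jk [e0 e1]; rewrite /cs /= in e1; apply/in_lineP; exists j => //; apply/ispt2.
  rewrite dirV0 dirV1 /cs /= mk2_0; [|lia]; rewrite mk2_1; [|lia].
  split; liag.
- split.
    case/in_lineP => j jk /ispt2 []; rewrite dirV0 dirV1 /cs /=.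
    rewrite mk2_0; [|lia]; rewrite mk2_1; [|lia]; move=> e0 e1; exists j => //; rewrite /cs /=; split; liag.
  case=> j jk [e0 e1]; rewrite /cs /= in e1; apply/in_lineP; exists j => //; apply/ispt2.
  rewrite dirV0 dirV1 /cs /= mk2_0; [|lia]; rewrite mk2_1; [|lia].
  split; liag.
- split.
    case/in_lineP => j jk /ispt2 []; rewrite dirV0 dirV1 /cs /=.
    rewrite mk2_0; [|lia]; rewrite mk2_1; [|lia]; move=> e0 e1; exists j => //; rewrite /cs /=; split; liag.
  case=> j jk [e0 e1]; rewrite /cs /= in e1; apply/in_lineP; exists j => //; apply/ispt2.
  rewrite dirV0 dirV1 /cs /= mk2_0; [|lia]; rewrite mk2_1; [|lia].
  split; liag.
Qed.


Lemma cs_le s j : (j < k)%N -> (cs s j <= k.-1)%N.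
Proof. by move=> jk; rewrite /cs; case: ifP => _; [|case: ifP => _]; lia. Qed.

Lemma mk2_in (t y0 s j : nat) : (t + k <= n.+1)%N -> (y0 <= n.+1 - k)%N -> (s < 3)%N ->
  (j < k)%N -> mk2 n (t + j) (y0 + cs s j) \in line_set (mk2 n t (y0 + cs s 0)) (dirV s) k.
Proof.
move=> ht hy hs jk; apply/memPsi => //; exists j => //.
have := cs_le s jk; move=> hc.
by rewrite mk2_0 ?mk2_1; [split| lia | lia].
Qed.

Lemma Psi_in (u : 'I_n.+1 * 'I_(n.+1 - k).+1 * 'I_3) :
  u.1.1 \in occset -> Psi u \in lines_with G2 w.
Proof.
case: u => [[t y0] s] /=; rewrite inE => /andP [ht oc].
have hy := ltn_ord y0; have hs := ltn_ord s.
rewrite /Psi /= -[k in line_set _ _ k]ek.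
have k0 : (0 < k)%N by lia.
have hc0 := cs_le s k0.
apply: lines_in.
- by apply/existsP; exists ord0; rewrite dirV0.
- apply: fitsI => j jw; rewrite ek in jw; exists (mk2 n (t + j) (y0 + cs s j)).
  have hc := cs_le s jw.
  apply: ispt_mk2; [lia|lia| |].
    rewrite dirV0 mk2_0; [lia|lia].
  rewrite dirV1 mk2_1; last by lia.
  move: hs hc hc0; rewrite /cs; case: (nat_of_ord s) => [|[|[|]]] //= *; liag.
- have key : forall (u : seq T), size u = k ->
      [forall j : 'I_k, Sv (t + j) == nth (Sv 0) u j] ->
      reads G2 (mk2 n t (y0 + cs s 0)) (dirV s) u.
    move=> u su /forallP H; apply: (readsI (x0 := Sv 0)) => j x ju /ispt2 [e0 _].
    rewrite su in ju.
    rewrite dirV0 mk2_0 in e0; last by lia.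
    rewrite /G2 ffunE; have -> : (x ord0 : nat) = (t + j)%N by liag.
    by have /eqP := H (Ordinal ju).
  case/orP: oc => H; apply/orP; [left|right]; apply: key => //.
  by rewrite size_rev.
Qed.


Definition Dom := [set u : 'I_n.+1 * 'I_(n.+1 - k).+1 * 'I_3 | u.1.1 \in occset].

Lemma Psi_inj : {in Dom &, injective Psi}.
Proof.
move=> [[t y0] s] [[t' y0'] s']; rewrite !inE /= => /andP [ht _] /andP [ht' _].
rewrite /Psi /= => E.
have hy := ltn_ord y0; have hs := ltn_ord s.
have hy' := ltn_ord y0'; have hs' := ltn_ord s'.
have hy1 : (y0 <= n.+1 - k)%N by lia.
have hy1' : (y0' <= n.+1 - k)%N by lia.
have k0 : (0 < k)%N by lia.
have k1 : (1 < k)%N by lia.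
have a1 := mk2_in ht hy1 hs k0; rewrite E in a1.
have a1' := mk2_in ht' hy1' hs' k0; rewrite -E in a1'.
have a2 := mk2_in ht hy1 hs k1; rewrite E in a2.
have c0 := cs_le s k0; have c1 := cs_le s k1.
have c0' := cs_le s' k0.
case/memPsi: a1 => // j1 j1k; rewrite mk2_0 ?mk2_1; [|lia|lia] => -[e1 f1].
case/memPsi: a1' => // j2 j2k; rewrite mk2_0 ?mk2_1; [|lia|lia] => -[e2 f2].
case/memPsi: a2 => // j3 j3k; rewrite mk2_0 ?mk2_1; [|lia|lia] => -[e3 f3].
have et : t = t' :> nat by lia.
have ej1 : j1 = 0%N by lia.
have ej3 : j3 = 1%N by lia.
rewrite ej1 in f1; rewrite ej3 in f3.
have [ey es] : (y0 = y0' :> nat) /\ (s = s' :> nat).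
  move: f1 f3 hs hs'; rewrite /cs.
  case: (nat_of_ord s) => [|[|[|]]] //=; case: (nat_of_ord s') => [|[|[|]]] //= *; lia.
by congr (_, _, _); apply: val_inj.
Qed.

Lemma lower_count : (#|occset| * (n.+1 - k).+1 * 3 <= fG G2 w)%N.
Proof.
have -> : (#|occset| * (n.+1 - k).+1 * 3 = #|Psi @: Dom|)%N.
  rewrite card_in_imset; last exact: Psi_inj.
  have -> : Dom = setX (setX occset setT) setT.
    by apply/setP => [[[t y0] s]]; rewrite !inE !andbT.
  by rewrite !cardsX !cardsT !card_ord.
apply: subset_leq_card; apply/subsetP => L /imsetP [u uD ->].
apply: Psi_in; by move: uD; rewrite inE.
Qed.

End Lower.

Local Close Scope ring_scope.
Unset Implicit Arguments.
Set Strict Implicit.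

Theorem theorem23 (T : finType) (w : seq T) (n : nat) :
  (2 <= size w)%N -> (size w <= n)%N ->
  ((f w n 1)%:Z * (3 * n%:Z - 4 * (size w)%:Z) <= (f w n 2)%:Z)%R /\
  (f w n 2 <= f w n 1 * (2 * n) + 4 * \sum_(size w <= i < n.+1) f w i 1)%N.
Proof.
move=> k2; case: n => [|n] kn; first lia.
split; last by apply: upper; lia.
have [a _] : exists a : T, true by case: w k2 {kn} => [|a ?] //; exists a.
have pos : (0 < #|{ffun point n.+1 1 -> T}|)%N.
  by apply/card_gt0P; exists [ffun _ => a].
have [S eS] := @eq_bigmax _ (fun G => fG G w) pos.
have e1 : f w n.+1 1 = fG S w by rewrite /f eS.
have h1 : (fG S w <= #|occset w S (size w)|)%N.
  rewrite /fG; apply: leq_trans (subset_leq_card (lines1_sub S (erefl (size w)) k2 kn)) _.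
  exact: leq_imset_card.
have h2 := lower_count S (erefl (size w)) k2 kn.
have h3 := fG_le_f w (G2 S).
rewrite e1.
move: h1 h2 h3; set F1 := fG S w; set o := #|_|; set F2 := f w n.+1 2.
move=> h1 h2 h3.
have h4 : (F1 * ((n.+1 - size w).+1 * 3) <= F2)%N.
  apply: leq_trans h3; apply: leq_trans h2; rewrite -mulnA; exact: leq_mul.
move: h4 kn; clear; set K := size w; move=> h4 kn.
nia.
Qed.
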